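(* Let $\Upsilon$ be a satisfiable label cover instance and let $\Gamma=(\tilde G,\tilde H)$ be any instance produced from it by the reduction described in the context. Then there exists an injective map $\varphi:V_{\tilde G}\to V_{\tilde H}$ that maps every edge of $\tilde G$ to an edge of $\tilde H$. Thus $\mathrm{OPT}_{QAP}(\Gamma)=|E_{\tilde G}|$.
   Context: A label cover instance $\Upsilon=(G=(V_G,E_G),\pi,[k])$ consists of a graph $G$ with $n=|V_G|$ vertices and edge set $E_G$, a label set $[k]=\{0,\dots,k-1\}$, and for each edge $(u,v)\in E_G$ a set $\pi_{uv}\subseteq[k]\times[k]$ of accepted label pairs. For a labeling $\Lambda:V_G\to[k]$, $\mathrm{Val}_{LC}(\Upsilon,\Lambda)=\frac{1}{|E_G|}\sum_{(u,v)\in E_G}\mathbf{1}[(\Lambda(u),\Lambda(v))\in\pi_{uv}]$, and $\mathrm{OPT}_{LC}(\Upsilon)=\max_\Lambda \mathrm{Val}_{LC}(\Upsilon,\Lambda)$; $\Upsilon$ is satisfiable if $\mathrm{OPT}_{LC}(\Upsilon)=1$. The reduction: let $N=\lceil n^4|E_G|k^5\rceil$ and $\alpha=1/n$. Set $V_{\tilde G}=V_G\times[N]$ and $V_{\tilde H}=V_G\times[k]\times[N]$. For every edge $(u,v)$ of $G$, independently choose a random set $\mathcal{E}_{uv}\subseteq[N]\times[N]$ containing each pair independently with probability $\alpha$. Let $E_{\tilde G}=\{((u,i),(v,j)):(u,v)\in E_G,(i,j)\in\mathcal{E}_{uv}\}$ and $E_{\tilde H}=\{((u,x,i),(v,y,j)):(u,v)\in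 E_G,(i,j)\in\mathcal{E}_{uv},(x,y)\in\pi_{uv}\}$. For an injective map $\varphi:V_{\tilde G}\to V_{\tilde H}$, $\mathrm{Val}_{QAP}(\Gamma,\varphi)=\sum_{(a,b)\in E_{\tilde G}}\mathbf{1}[(\varphi(a),\varphi(b))\in E_{\tilde H}]$, and $\mathrm{OPT}_{QAP}(\Gamma)$ is the maximum over injective maps. *)

(* Defs.v *)
From mathcomp Require Import all_boot all_order all_algebra.
Set Implicit Arguments. Unset Strict Implicit. Unset Printing Implicit Defensive.
Import Order.TTheory GRing.Theory Num.Theory.

(* Label cover instance: vertex set V_G = 'I_n, label set [k] = 'I_k,
   edge set EG (ordered pairs (u,v)), accepted label pairs pi u v. *)

Definition ValLC (n k : nat) (EG : {set 'I_n * 'I_n})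
  (pi : 'I_n -> 'I_n -> {set 'I_k * 'I_k}) (L : {ffun 'I_n -> 'I_k}) : rat :=
  (#|[set e in EG | (L e.1, L e.2) \in pi e.1 e.2]|%:R / #|EG|%:R)%R.

Definition OPTLC (n k : nat) (EG : {set 'I_n * 'I_n})
  (pi : 'I_n -> 'I_n -> {set 'I_k * 'I_k}) : rat :=
  (\big[Num.max/0]_(L : {ffun 'I_n -> 'I_k}) ValLC EG pi L)%R.

Definition satisfiable (n k : nat) (EG : {set 'I_n * 'I_n})
  (pi : 'I_n -> 'I_n -> {set 'I_k * 'I_k}) : Prop :=
  OPTLC EG pi = 1%R.

(* N = ceil(n^4 |E_G| k^5) (already an integer). *)
Definition Nred (n k : nat) (EG : {set 'I_n * 'I_n}) : nat :=
  n ^ 4 * #|EG| * k ^ 5.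

(* The reduction, for a given outcome Ecal u v ⊆ [N]×[N] of the random sets. *)
Section Reduction.
Variables (n k N : nat) (EG : {set 'I_n * 'I_n})
  (pi : 'I_n -> 'I_n -> {set 'I_k * 'I_k})
  (Ecal : 'I_n -> 'I_n -> {set 'I_N * 'I_N}).

Definition VGt := ('I_n * 'I_N)%type.
Definition VHt := ('I_n * 'I_k * 'I_N)%type.

Definition EGt : {set VGt * VGt} :=
  [set ab : VGt * VGt | ((ab.1.1, ab.2.1) \in EG)
                        && ((ab.1.2, ab.2.2) \in Ecal ab.1.1 ab.2.1)].

Definition EHt : {set VHt * VHt} :=
  [set ab : VHt * VHt | [&& ((ab.1.1.1, ab.2.1.1) \in EG),
                           ((ab.1.2, ab.2.2) \in Ecal ab.1.1.1 ab.2.1.1) &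
                           ((ab.1.1.2, ab.2.1.2) \in pi ab.1.1.1 ab.2.1.1)]].

Definition ValQAP (phi : {ffun VGt -> VHt}) : nat :=
  #|[set ab in EGt | (phi ab.1, phi ab.2) \in EHt]|.

Definition OPTQAP : nat :=
  \max_(phi : {ffun VGt -> VHt} | injectiveb phi) ValQAP phi.
End Reduction.

(* Main.v *)
Require Import Defs.
From mathcomp Require Import all_boot all_order all_algebra.
Import Order.TTheory GRing.Theory Num.Theory.

Lemma sat_label (n k : nat) (EG : {set 'I_n * 'I_n})
  (pi : 'I_n -> 'I_n -> {set 'I_k * 'I_k}) :
  satisfiable EG pi ->
  exists L : {ffun 'I_n -> 'I_k}, forall e, e \in EG -> (L e.1, L e.2) \in pi e.1 e.2.
Proof.
rewrite /satisfiable /OPTLC => H.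
have [L HL|] := pickP (fun L : {ffun 'I_n -> 'I_k} =>
   #|[set e in EG | (L e.1, L e.2) \in pi e.1 e.2]| == #|EG|).
  exists L => e He.
  have Hsub : [set e in EG | (L e.1, L e.2) \in pi e.1 e.2] \subset EG.
    by apply/subsetP => x; rewrite inE => /andP[].
  have Heq := subset_cardP (eqP HL) Hsub.
  have : e \in [set e in EG | (L e.1, L e.2) \in pi e.1 e.2] by rewrite Heq.
  by rewrite inE => /andP[].
move=> Hno; exfalso.
suff : (\big[Num.max/0]_(L : {ffun 'I_n -> 'I_k}) ValLC EG pi L < 1)%R.
  by rewrite H ltxx.
apply: (big_ind (fun x : rat => x < 1)%R) => //.
  by move=> x y; rewrite gt_max => -> ->.
move=> L _; rewrite /ValLC.
have := Hno L => /negbT HL.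
have Hsub : [set e in EG | (L e.1, L e.2) \in pi e.1 e.2] \subset EG.
  by apply/subsetP => x; rewrite inE => /andP[].
have Hle := subset_leq_card Hsub.
have Hlt : (#|[set e in EG | (L e.1, L e.2) \in pi e.1 e.2]| < #|EG|)%N.
  by rewrite ltn_neqAle HL Hle.
have Hpos : (0 < #|EG|%:R :> rat)%R by rewrite ltr0n; apply: leq_ltn_trans Hlt.
by rewrite ltr_pdivrMr // mul1r ltr_nat.
Qed.

Theorem mainTheorem5 (n k : nat) (EG : {set 'I_n * 'I_n})
  (pi : 'I_n -> 'I_n -> {set 'I_k * 'I_k})
  (Ecal : 'I_n -> 'I_n -> {set 'I_(Nred k EG) * 'I_(Nred k EG)}) :
  satisfiable EG pi ->
  (exists phi : VGt n (Nred k EG) -> VHt n k (Nred k EG),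
      injective phi /\
      forall a b, (a, b) \in EGt EG Ecal -> (phi a, phi b) \in EHt EG pi Ecal)
  /\ OPTQAP EG pi Ecal = #|EGt EG Ecal|.
Proof.
move=> /sat_label [L HL].
pose f := fun a : VGt n (Nred k EG) => ((a.1, L a.1, a.2) : VHt n k (Nred k EG)).
have finj : injective f.
  by move=> [u i] [v j] [-> _ ->].
have fedge : forall a b, (a, b) \in EGt EG Ecal -> (f a, f b) \in EHt EG pi Ecal.
  move=> [u i] [v j]; rewrite !inE /= => /andP[H1 H2].
  by rewrite H1 H2 /=; exact: (HL (u, v) H1).
split; first by exists f.
apply/eqP; rewrite eqn_leq; apply/andP; split.
  apply/bigmax_leqP => phi _; rewrite /ValQAP; apply: subset_leq_card.
  by apply/subsetP => x; rewrite inE => /andP[].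
pose phi := [ffun a => f a].
have Hinj : injectiveb phi by apply/injectiveP => x y; rewrite !ffunE; exact: finj.
apply: leq_trans (leq_bigmax_cond _ Hinj).
rewrite /ValQAP; apply: subset_leq_card; apply/subsetP => [[a b]] Hab.
by rewrite inE Hab /= !ffunE fedge.
Qed.
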